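(* Let $\mathcal A\in\mathbb C^{n_1\times n_1\times n_3}$ with $\mathrm{ind}(\mathcal A)=k$ and let $\mathcal A^-$ be a fixed element of $\mathcal A\{1\}$. If $\mathcal A^{-,D}$ is idempotent, then: (a) $\mathcal A^k=\mathcal A^{k+1}$, and moreover $\mathcal A^D\mathcal A^k=\mathcal A^k$; (b) $(\mathcal A^{-,D})^k=(\mathcal A^{-,D})^k\mathcal A$, and moreover $(\mathcal A^{-,D})^m=(\mathcal A^{-,D})^m\mathcal A$ for every positive integer $m$; (c) $\mathcal A^{-,D}=(\mathcal A^{-,D})^m\mathcal A^m$ for every positive integer $m$; (d) $\mathcal A^k\mathcal A^{-,D}=\mathcal A^k$.
   Context: Fix a nonsingular matrix $M\in\mathbb C^{n_3\times n_3}$. For $\mathcal C\in\mathbb C^{n_1\times n_2\times n_3}$ let $\widehat{\mathcal C}=\mathcal C\times_3M$, i.e. $\widehat{\mathcal C}_{ijk}=\sum_{l=1}^{n_3}M_{kl}\mathcal C_{ijl}$, and let $\widehat{\mathcal C}^{(i)}$ denote its $i$-th frontal slice. The M-product $\mathcal C\star_M\mathcal D$ of $\mathcal C\in\mathbb C^{n_1\times n_2\times n_3}$ and $\mathcal D\in\mathbb C^{n_2\times l\times n_3}$ is the unique tensor with $\widehat{\mathcal C\star_M\mathcal D}^{(i)}=\widehat{\mathcal C}^{(i)}\widehat{\mathcal D}^{(i)}$ for all $i\in[n_3]$. Juxtaposition of tensors denotes the M-product; powers are M-product powers with $\mathcal A^0=\mathcal I$ where $\widehat{\mathcal I}^{(i)}=I_{n_1}$.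 $\mathcal A\{1\}$ is the set of all $\mathcal W$ with $\mathcal A\mathcal W\mathcal A=\mathcal A$. The index $\mathrm{ind}(\mathcal A)$ is $\max_{i}\mathrm{ind}(\widehat{\mathcal A}^{(i)})$, where the index of a square matrix $B$ is the least $k\ge0$ with $\mathrm{rank}(B^{k+1})=\mathrm{rank}(B^k)$. For $\mathrm{ind}(\mathcal A)=k$, the Drazin inverse $\mathcal A^D$ is the unique $\mathcal W$ with $\mathcal W\mathcal A^{k+1}=\mathcal A^k$, $\mathcal W\mathcal A\mathcal W=\mathcal W$, $\mathcal A\mathcal W=\mathcal W\mathcal A$. The 1-D inverse is $\mathcal A^{-,D}=\mathcal A^-\mathcal A\mathcal A^D$; it is idempotent if $(\mathcal A^{-,D})^2=\mathcal A^{-,D}$. *)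

(* Defs.v *)
From HB Require Import structures.
From mathcomp Require Import all_boot all_order all_algebra.
From mathcomp Require Import complex.
From mathcomp Require Import reals.
Set Implicit Arguments. Unset Strict Implicit. Unset Printing Implicit Defensive.
Import Order.TTheory GRing.Theory Num.Theory.
Local Open Scope ring_scope.

(* Third-order tensors in F^{n1 x n2 x n3}, stored by frontal slices:
   T k = the k-th frontal slice, so T k i j = T_{ijk}. *)
Definition tensor (F : Type) (n3 n1 n2 : nat) := {ffun 'I_n3 -> 'M[F]_(n1, n2)}.

Section MProduct.
Variables (F : fieldType) (n3 : nat) (M : 'M[F]_n3).

Definition thatm n1 n2 (C : tensor F n3 n1 n2) : tensor F n3 n1 n2 :=
  [ffun k => \sum_(l < n3) M k l *: C l].

Definition tunhat n1 n2 (C : tensor F n3 n1 n2) : tensor F n3 n1 n2 :=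
  [ffun k => \sum_(l < n3) invmx M k l *: C l].

Definition tmul n1 n2 p (C : tensor F n3 n1 n2) (D : tensor F n3 n2 p)
  : tensor F n3 n1 p :=
  tunhat [ffun i => thatm C i *m thatm D i].

Definition tid n1 : tensor F n3 n1 n1 := tunhat [ffun _ => 1%:M].

Fixpoint tpow n1 (A : tensor F n3 n1 n1) (m : nat) : tensor F n3 n1 n1 :=
  match m with
  | 0 => tid n1
  | m'.+1 => tmul (tpow A m') A
  end.

(* index of a square matrix: least k >= 0 with rank(B^{k+1}) = rank(B^k)
   (such k always exists and is <= n, so searching 0..n finds the least one) *)
Definition mxindex n (B : 'M[F]_n) : nat :=
  find (fun k => \rank (B ^+ k.+1) == \rank (B ^+ k)) (iota 0 n.+1).

Definition tindex n1 (A : tensor F n3 n1 n1) : nat :=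
  \max_(i < n3) mxindex (thatm A i).

Definition tinner1 n1 n2 (A : tensor F n3 n1 n2) (W : tensor F n3 n2 n1) : Prop :=
  tmul (tmul A W) A = A.

Definition is_tdrazin n1 (A W : tensor F n3 n1 n1) : Prop :=
  let k := tindex A in
  [/\ tmul W (tpow A k.+1) = tpow A k, tmul (tmul W A) W = W & tmul A W = tmul W A].

Definition t1D n1 (Am A AD : tensor F n3 n1 n1) : tensor F n3 n1 n1 :=
  tmul (tmul Am A) AD.

End MProduct.

(* Main.v *)
Require Import Defs.
From HB Require Import structures.
From mathcomp Require Import all_boot all_order all_algebra.
From mathcomp Require Import complex.
From mathcomp Require Import reals.
Import GRing.Theory Num.Theory.
Local Open Scope ring_scope.
Local Open Scope complex_scope.
Set Implicit Arguments. Unset Strict Implicit.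

Section S.
Variables (F : fieldType) (n3 n1 : nat) (M : 'M[F]_n3).
Hypothesis hM : M \in unitmx.

Lemma compK n2 p (P Q : 'M[F]_n3) (C : 'I_n3 -> 'M[F]_(n2,p)) k :
  P *m Q = 1%:M ->
  \sum_(l < n3) P k l *: (\sum_(j < n3) Q l j *: C j) = C k.
Proof.
move=> PQ.
under eq_bigr do rewrite scaler_sumr.
rewrite exchange_big /=.
transitivity (\sum_(j < n3) (P *m Q) k j *: C j).
  apply: eq_bigr => j _; rewrite mxE scaler_suml; apply: eq_bigr => l _.
  by rewrite scalerA.
rewrite PQ (bigD1 k) //= big1 ?addr0; first by rewrite mxE eqxx scale1r.
by move=> j /negbTE; rewrite mxE eq_sym => ->; rewrite scale0r.
Qed.

Lemma hatK n2 (C : tensor F n3 n1 n2) : thatm M (tunhat M C) = C.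
Proof.
apply/ffunP => k; rewrite ffunE.
under eq_bigr do rewrite ffunE.
by apply: compK; rewrite mulmxV.
Qed.

Lemma unhatK n2 (C : tensor F n3 n1 n2) : tunhat M (thatm M C) = C.
Proof.
apply/ffunP => k; rewrite ffunE.
under eq_bigr do rewrite ffunE.
by apply: compK; rewrite mulVmx.
Qed.

Lemma hat_inj n2 (C D : tensor F n3 n1 n2) : thatm M C = thatm M D -> C = D.
Proof. by move=> h; rewrite -(unhatK C) h unhatK. Qed.

Lemma hat_mul (C D : tensor F n3 n1 n1) i :
  thatm M (tmul M C D) i = thatm M C i *m thatm M D i.
Proof. by rewrite /tmul hatK ffunE. Qed.

Lemma hat_id i : thatm M (tid M n1) i = 1%:M.
Proof. by rewrite /tid hatK ffunE. Qed.

Lemma tmulA (A B C : tensor F n3 n1 n1) :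
  tmul M (tmul M A B) C = tmul M A (tmul M B C).
Proof. by apply: hat_inj; apply/ffunP=> i; rewrite !hat_mul mulmxA. Qed.

Lemma tmul1l (A : tensor F n3 n1 n1) : tmul M (tid M n1) A = A.
Proof. by apply: hat_inj; apply/ffunP=> i; rewrite !hat_mul hat_id mul1mx. Qed.

Lemma tmul1r (A : tensor F n3 n1 n1) : tmul M A (tid M n1) = A.
Proof. by apply: hat_inj; apply/ffunP=> i; rewrite !hat_mul hat_id mulmx1. Qed.

Lemma tpowS (A : tensor F n3 n1 n1) m : tpow M A m.+1 = tmul M A (tpow M A m).
Proof.
elim: m => [|m IH]; first by rewrite /= tmul1l tmul1r.
transitivity (tmul M (tpow M A m.+1) A); first by [].
by rewrite {1}IH tmulA.
Qed.

Lemma tpow_comm (A B : tensor F n3 n1 n1) m :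
  tmul M A B = tmul M B A -> tmul M (tpow M A m) B = tmul M B (tpow M A m).
Proof.
move=> h; elim: m => [|m IH] /=; first by rewrite tmul1l tmul1r.
by rewrite tmulA h -tmulA IH tmulA.
Qed.

Lemma tpow_idem (X : tensor F n3 n1 n1) m : tmul M X X = X -> (0 < m)%N -> tpow M X m = X.
Proof.
move=> h; elim: m => [|[|m] IH] // _; first by rewrite /= tmul1l.
transitivity (tmul M (tpow M X m.+1) X); first by [].
by rewrite IH.
Qed.

Lemma gen (A Am AD : tensor F n3 n1 n1) (k : nat) :
  tindex M A = k ->
  tinner1 M A Am ->
  is_tdrazin M A AD ->
  let X := t1D M Am A AD in
  tmul M X X = X ->
  [/\ (tpow M A k = tpow M A k.+1 /\ tmul M AD (tpow M A k) = tpow M A k),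
      (tpow M X k = tmul M (tpow M X k) A /\
       forall m : nat, (0 < m)%N -> tpow M X m = tmul M (tpow M X m) A),
      (forall m : nat, (0 < m)%N -> X = tmul M (tpow M X m) (tpow M A m))
    & tmul M (tpow M A k) X = tpow M A k].
Proof.
move=> hk h1 [] ; rewrite hk => D1 D2 D3 X hX.
have mA := @tmulA.
have AX : tmul M A X = tmul M A AD by rewrite /X /t1D -!mA h1.
have e1 : tmul M A (tmul M X X) = AD.
  rewrite -mA AX /X /t1D D3.
   transitivity (tmul M (tmul M AD (tmul M (tmul M A Am) A)) AD); first by rewrite !mA.
  by rewrite h1 D2.
have ADe : AD = tmul M A AD by rewrite -{1}e1 hX AX.
have ADA : tmul M AD A = AD by rewrite -D3 -ADe.
have Ak : tpow M A k = tpow M A k.+1.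
  by rewrite -{1}D1 {1}ADe mA D1 tpowS.
have ADk : tmul M AD (tpow M A k) = tpow M A k by rewrite {1}Ak D1.
have XA : tmul M X A = X by rewrite /X /t1D mA ADA.
have XAm m : tmul M X (tpow M A m) = X.
  elim: m => [|m IH] /=; first by rewrite tmul1r.
  by rewrite -mA IH XA.
have Xm m : (0 < m)%N -> tpow M X m = tmul M (tpow M X m) A.
  by move=> m0; rewrite (tpow_idem hX m0) XA.
split.
- by [].
- split=> //; case: k hk D1 Ak ADk => [|k] _ _ Ak _; last exact: Xm.
  by move: Ak; rewrite /= !tmul1l.
- by move=> m m0; rewrite (tpow_idem hX m0) XAm.
- rewrite {1}Ak -[tpow M A k.+1]/(tmul M (tpow M A k) A) mA AX -mA.
  by rewrite -[tmul M (tpow M A k) A]/(tpow M A k.+1) (tpow_comm _ D3) D1.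
Qed.

End S.

Theorem theorem3p6 (R : realType) (n1 n3 : nat) (M : 'M[R[i]]_n3)
  (A Am AD : tensor R[i] n3 n1 n1) (k : nat) :
  M \in unitmx ->
  tindex M A = k ->
  tinner1 M A Am ->
  is_tdrazin M A AD ->
  let X := t1D M Am A AD in
  tmul M X X = X ->
  [/\ (tpow M A k = tpow M A k.+1 /\ tmul M AD (tpow M A k) = tpow M A k),
      (tpow M X k = tmul M (tpow M X k) A /\
       forall m : nat, (0 < m)%N -> tpow M X m = tmul M (tpow M X m) A),
      (forall m : nat, (0 < m)%N -> X = tmul M (tpow M X m) (tpow M A m))
    & tmul M (tpow M A k) X = tpow M A k].
Proof. move=> hM; exact: gen. Qed.
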